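(* Let $0<c<1$ and $0<d<1$ be irrational numbers, and let $f(n)=[c(n+1)]-[cn]$ and $g(n)=[d(n+1)]-[dn]$. Then for every nonnegative integer $k$ and every real $t\ge0$, $$\sum_{n\le t} f(n)\,g([cn]+k+1)=[d([c([t]+1)]+k+1)]-[d(k+1)],$$ where the sum is over positive integers $n\le t$.
   Context: $[x]$ is the greatest integer not exceeding $x$. *)

(* Defs.v *)
From mathcomp Require Import all_boot all_order all_algebra.
From mathcomp Require Import all_classical all_reals.
Set Implicit Arguments. Unset Strict Implicit. Unset Printing Implicit Defensive.
Import Order.TTheory GRing.Theory Num.Theory.
Local Open Scope ring_scope.

Definition fdiff (R : realType) (c : R) (n : int) : int :=
  Num.floor (c * (n + 1)%:~R) - Num.floor (c * n%:~R).

(* Main.v *)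
Require Import Defs.
From mathcomp Require Import all_boot all_order all_algebra.
From mathcomp Require Import all_classical all_reals.
From mathcomp Require Import zify.
Import Order.TTheory GRing.Theory Num.Theory.
Local Open Scope ring_scope.

Lemma castS (R : realType) (n : nat) : ((n%:Z + 1)%:~R : R) = n.+1%:R.
Proof. by rewrite intrD1 -natr1. Qed.

Lemma step01 (R : realType) (c : R) (hc0 : 0 < c) (hc1 : c < 1) (n : nat) :
  Num.floor (c * n.+1%:R) = Num.floor (c * n%:R) \/
  Num.floor (c * n.+1%:R) = Num.floor (c * n%:R) + 1.
Proof.
have h1 : Num.floor (c * n%:R) <= Num.floor (c * n.+1%:R).
  by apply: le_floor; apply: ler_wpM2l; [exact: ltW | rewrite ler_nat].
have h2 : Num.floor (c * n.+1%:R) < Num.floor (c * n%:R) + 1 + 1.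
  rewrite floor_lt_int -natr1 mulrDr mulr1 intrD1.
  have := floorD1_gt (c * n%:R) => h.
  by apply: ltrD.
lia.
Qed.

Theorem lemma8 (R : realType) (c d : R)
  (hc0 : 0 < c) (hc1 : c < 1) (hci : irrational c)
  (hd0 : 0 < d) (hd1 : d < 1) (hdi : irrational d)
  (k : nat) (t : R) (ht : 0 <= t) :
  \sum_(1 <= n < `|Num.floor t|%N.+1)
     fdiff c n%:Z * fdiff d (Num.floor (c * n%:R) + k%:Z + 1)
  = Num.floor (d * (Num.floor (c * (Num.floor t + 1)%:~R) + k%:Z + 1)%:~R)
    - Num.floor (d * (k%:Z + 1)%:~R).
Proof.
pose F (n : nat) := Num.floor (d * (Num.floor (c * n%:R) + k%:Z + 1)%:~R).
have step : forall n : nat, fdiff c n%:Z * fdiff d (Num.floor (c * n%:R) + k%:Z + 1)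
   = F n.+1 - F n.
  move=> n; rewrite /F /fdiff castS.
  have mz : ((n%:Z)%:~R : R) = n%:R by [].
  rewrite mz.
  case: (@step01 R c hc0 hc1 n) => ->.
    rewrite !subrr; exact: mul0r.
  by rewrite addrAC subrr add0r mul1r (addrAC _ 1 k%:Z).
rewrite (eq_bigr (fun n => F n.+1 - F n)); last by move=> i _; apply: step.
rewrite telescope_sumr // /F.
have ft : Num.floor t = (`|Num.floor t|%N)%:Z.
  by rewrite gez0_abs // floor_ge0.
rewrite ft (castS R) mulr1.
have -> : Num.floor c = 0.
  apply/eqP; rewrite eq_le floor_le0 hc1 floor_ge0 ltW //.
by rewrite add0r.
Qed.
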